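(* Let $G$ be a bipartite graph with bipartition $A\cup B$ and minimum degree $\delta$, such that $|A|\ge |B|$. Then there are sequences of nonempty subsets $A=A_0\supseteq A_1\supseteq\dots\supseteq A_\delta$ and $B=B_0\supseteq B_1\supseteq\dots\supseteq B_\delta$, and pairwise edge-disjoint matchings $M_1,\dots,M_\delta$, such that $|A_i|=|B_i|$ for each $1\le i\le\delta$, and each $M_i$ is a perfect matching of $G[A_i\cup B_i]$. *)

(* Defs.v *)
(* finite simple graphs as symmetric irreflexive relations. *)
From mathcomp Require Import all_boot.
Set Implicit Arguments. Unset Strict Implicit. Unset Printing Implicit Defensive.

Section Graphs.
Variable T : finType.
Variable e : rel T.

Definition deg (v : T) : nat := #|[set u | e v u]|.

Definition is_edge (f : {set T}) : bool :=
  [exists x, exists y, e x y && (f == [set x; y])].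

Definition perfect_matching (S : {set T}) (M : {set {set T}}) : Prop :=
  (forall f, f \in M -> is_edge f /\ f \subset S) /\
  (forall v, v \in S -> #|[set f in M | v \in f]| = 1).

End Graphs.

(* Main.v *)
From mathcomp Require Import all_boot zify.
Require Import Defs.
Set Implicit Arguments. Unset Strict Implicit. Unset Printing Implicit Defensive.

Section Hall.
Variable T : finType.

Definition nbh (D : rel T) (U : {set T}) : {set T} := [set y | [exists x in U, D x y]].

Lemma mem_nbh (D : rel T) (U : {set T}) x y : x \in U -> D x y -> y \in nbh D U.
Proof. by move=> xU Dxy; rewrite inE; apply/existsP; exists x; rewrite xU. Qed.

Lemma nbhP (D : rel T) (U : {set T}) y : reflect (exists2 x, x \in U & D x y) (y \in nbh D U).
Proof.
rewrite inE; apply: (iffP existsP) => [[x /andP[]]|[x xU Dxy]]; first by exists x.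
by exists x; rewrite xU.
Qed.

Lemma nbhS (D : rel T) (U W : {set T}) : U \subset W -> nbh D U \subset nbh D W.
Proof.
move=> sUW; apply/subsetP => y /nbhP [x xU Dxy]; apply: (mem_nbh _ Dxy).
exact: (subsetP sUW).
Qed.

Lemma hall n : forall (D : rel T) (A : {set T}), #|A| <= n ->
  (forall U : {set T}, U \subset A -> #|U| <= #|nbh D U|) ->
  exists f : T -> T, {in A &, injective f} /\ (forall a, a \in A -> D a (f a)).
Proof.
elim: n => [|n IH] D A leA hallA.
  move: leA; rewrite leqn0 cards_eq0 => /eqP ->.
  by exists id; split => [x y|a]; rewrite inE.
case: (boolP [exists U : {set T}, [&& U \subset A, U != set0, U != A & #|nbh D U| <= #|U|]]).
- case/existsP => U /and4P [sUA nU0 nUA leNU].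
  have ltU : #|U| < #|A| by rewrite proper_card // properEneq nUA sUA.
  have [f1 [inj1 D1]] := IH D U (ltac:(lia)) (fun W sWU => hallA W (subset_trans sWU sUA)).
  pose D2 := fun x y => D x y && (y \notin nbh D U).
  have [u uU] : exists u, u \in U by apply/set0Pn.
  have ltAU : #|A :\: U| < #|A|.
    rewrite proper_card //; apply/properP; split; first exact: subsetDl.
    by exists u; [exact: (subsetP sUA) | rewrite inE uU].
  have hall2 : forall W : {set T}, W \subset A :\: U -> #|W| <= #|nbh D2 W|.
    move=> W sW.
    have h1 : #|W :|: U| <= #|nbh D (W :|: U)|.
      by apply hallA; rewrite subUset sUA andbT; exact: subset_trans sW (subsetDl _ _).
    have dWU : W :&: U = set0.
      apply/setP => x; rewrite !inE; apply/andP => -[xW xU].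
      by move: (subsetP sW x xW); rewrite inE xU.
    have h2 := cardsUI W U; rewrite dWU cards0 in h2.
    have e3 : nbh D (W :|: U) = nbh D W :|: nbh D U.
      apply/setP => y; apply/idP/setUP.
      - move/nbhP => [x]; rewrite inE => /orP [xW|xU] Dxy.
          by left; rewrite (mem_nbh xW Dxy).
        by right; rewrite (mem_nbh xU Dxy).
      - case => /nbhP [x xW Dxy]; apply: (mem_nbh _ Dxy); by rewrite inE xW ?orbT.
    have e4 : nbh D2 W = nbh D W :\: nbh D U.
      apply/setP => y; rewrite [in RHS]inE; apply/idP/idP.
        by move/nbhP => [x xW /andP[Dxy ny]]; rewrite ny (mem_nbh xW Dxy).
      by case/andP => ny /nbhP[x xW Dxy]; apply: (mem_nbh xW); rewrite /D2 Dxy ny.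
    have h5 := cardsID (nbh D U) (nbh D W :|: nbh D U).
    have e6 : (nbh D W :|: nbh D U) :&: nbh D U = nbh D U by apply/setIidPr; exact: subsetUr.
    have e7 : (nbh D W :|: nbh D U) :\: nbh D U = nbh D W :\: nbh D U.
      by rewrite setDUl setDv setU0.
    rewrite e6 e7 -e3 -e4 in h5.

    lia.
  have [f2 [inj2 D2f]] := IH D2 (A :\: U) (ltac:(lia)) hall2.
  exists (fun x => if x \in U then f1 x else f2 x); split.
    move=> x y xA yA /=.
    case: ifP => xU; case: ifP => yU.
    + exact: inj1.
    + move=> e; have: y \in A :\: U by rewrite inE yU yA.
      by move/D2f; rewrite /D2 -e (mem_nbh xU (D1 x xU)) andbF.
    + move=> e; have: x \in A :\: U by rewrite inE xU xA.
      by move/D2f; rewrite /D2 e (mem_nbh yU (D1 y yU)) andbF.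
    + by apply: inj2; rewrite inE ?xU ?yU ?xA ?yA.
  move=> a aA; case: ifP => aU; first exact: D1.
  by have /D2f/andP[] : a \in A :\: U by rewrite inE aU aA.
- rewrite negb_exists => /forallP H.
  case: (set_0Vmem A) => [-> | [a aA]].
    by exists id; split => [x y|x]; rewrite inE.
  have : 0 < #|nbh D [set a]| by have := hallA [set a]; rewrite sub1set cards1; apply.
  rewrite card_gt0 => /set0Pn [b /nbhP [a0]]; rewrite inE => /eqP -> Dab; clear a0.
  pose D1 := fun x y => D x y && (y != b).
  have hall1 : forall W : {set T}, W \subset A :\ a -> #|W| <= #|nbh D1 W|.
    move=> W sW; case: (set_0Vmem W) => [-> | [w wW]]; first by rewrite cards0.
    have sWA : W \subset A by apply: subset_trans sW (subsetDl _ _).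
    have nWA : W != A.
      apply/eqP => eWA; have := subsetP sW a; rewrite -eWA !inE eqxx /=.
      by move=> /(_ (ltac:(by rewrite eWA))).
    have nW0 : W != set0 by apply/set0Pn; exists w.
    have := H W; rewrite sWA nW0 nWA /= -ltnNge => h1.
    have s2 : nbh D W \subset b |: nbh D1 W.
      apply/subsetP => y /nbhP [x xW Dxy]; rewrite !inE.
      case: eqP => //= nyb; apply/existsP; exists x; rewrite xW /D1 Dxy /=.
      by apply/eqP.
    have := subset_leq_card s2; rewrite cardsU1.
    case: (b \notin nbh D1 W) => /=; lia.
  have ltA : #|A :\ a| < #|A| by rewrite (cardsD1 a A) aA.
  have [f1 [inj1 D1f]] := IH D1 (A :\ a) (ltac:(lia)) hall1.
  exists (fun x => if x == a then b else f1 x); split.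
    move=> x y xA yA /=.
    case: eqP => xa; case: eqP => ya.
    + by rewrite xa ya.
    + move=> e; have: y \in A :\ a by rewrite !inE yA andbT; apply/eqP.
      by move/D1f; rewrite /D1 -e eqxx andbF.
    + move=> e; have: x \in A :\ a by rewrite !inE xA andbT; apply/eqP.
      by move/D1f; rewrite /D1 e eqxx andbF.
    + by apply: inj1; rewrite !inE ?xA ?yA andbT; apply/eqP.
  move=> x xA; case: eqP => [->|xa] //.
  by have /D1f/andP[] : x \in A :\ a by rewrite !inE xA andbT; apply/eqP.
Qed.

Lemma choose_sub (D : rel T) (A : {set T}) : A != set0 -> #|nbh D A| <= #|A| ->
  (forall a, a \in A -> exists y, D a y) ->
  exists (A' : {set T}) (f : T -> T), [/\ A' \subset A, A' != set0,
    {in A' &, injective f}, (forall a, a \in A' -> D a (f a)) & nbh D A' = f @: A'].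
Proof.
move=> nA leA hnb.
pose P := fun U : {set T} => [&& U != set0, U \subset A & #|nbh D U| <= #|U|].
have PA : P A by rewrite /P nA subxx leA.
case: (arg_minnP (fun U : {set T} => #|U|) PA) => U0 /and3P [n0 sU leN] minU.
have hallU : forall W : {set T}, W \subset U0 -> #|W| <= #|nbh D W|.
  move=> W sW; rewrite leqNgt; apply/negP => ltW.
  case: (set_0Vmem W) => [W0|[w wW]]; first by rewrite W0 cards0 in ltW.
  have PW : P W.
    apply/and3P; split; [by apply/set0Pn; exists w | exact: subset_trans sW sU | exact: ltnW ltW].
  have leUW := minU W PW.
  have eW : W = U0 by apply/eqP; rewrite eqEcard sW leUW.
  rewrite eW in ltW wW.
  have cU := cardsD1 w U0; rewrite wW in cU.
  case: (set_0Vmem (U0 :\ w)) => [e1 | [v vV]].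
    rewrite e1 cards0 in cU.
    have [y Dwy] := hnb w (subsetP sU w wW).
    have : 0 < #|nbh D U0| by rewrite card_gt0; apply/set0Pn; exists y; exact: mem_nbh Dwy.
    lia.
  have PV : P (U0 :\ w).
    apply/and3P; split; [by apply/set0Pn; exists v | exact: subset_trans (subD1set _ _) sU |].
    have := subset_leq_card (nbhS D (subD1set U0 w)); lia.
  have := minU _ PV; lia.
have [f [inj Df]] := hall (leqnn #|U0|) hallU.
exists U0, f; split => //.
apply/eqP; rewrite eq_sym eqEcard; apply/andP; split.
  by apply/subsetP => y /imsetP [a aU ->]; apply: mem_nbh (Df a aU).
by rewrite (card_in_imset inj).
Qed.

Variable e : rel T.

Definition good (D : rel T) k (A B : {set T}) (As Bs : nat -> {set T})
  (M : nat -> {set {set T}}) :=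
  [/\ As 0 = A, Bs 0 = B,
     (forall i, i < k -> As i.+1 \subset As i /\ Bs i.+1 \subset Bs i),
     (forall i, 0 < i <= k -> [/\ As i != set0, Bs i != set0, #|As i| = #|Bs i|,
         perfect_matching e (As i :|: Bs i) (M i) &
         (forall g, g \in M i -> exists x y, D x y /\ g = [set x; y])]) &
     (forall i j, 0 < i <= k -> 0 < j <= k -> i != j -> [disjoint M i & M j])].

Lemma main_ind k : forall (D : rel T) (A B : {set T}),
  [disjoint A & B] -> A != set0 -> #|B| <= #|A| ->
  (forall x y, D x y -> [&& e x y, x \in A & y \in B]) ->
  (forall a, a \in A -> k <= #|[set y | D a y]|) ->
  exists As Bs M, good D k A B As Bs M.
Proof.
elim: k => [|k IH] D A B dAB nA leBA hD hdeg.
  exists (fun _ => A), (fun _ => B), (fun _ => set0); split => //.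
  - by move=> i /andP [h1 h2]; exfalso; lia.
  - by move=> i j /andP [h1 h2]; exfalso; lia.
have notAB : forall x, x \in A -> x \in B -> False.
  by move=> x xA xB; move: (disjointFr dAB xA); rewrite xB.
have hnb : forall a, a \in A -> exists y, D a y.
  move=> a aA; have : 0 < #|[set y | D a y]| by apply: leq_trans (hdeg a aA).
  rewrite card_gt0 => /set0Pn [y].
  by rewrite inE; exists y.
have lenb : #|nbh D A| <= #|A|.
  apply: leq_trans leBA; apply: subset_leq_card; apply/subsetP => y /nbhP [x xA Dxy].
  by case/and3P: (hD x y Dxy).
have [A' [f [sA nA' inj Df enb]]] := choose_sub nA lenb hnb.
pose B' := f @: A'.
have fB : forall a, a \in A' -> f a \in B by move=> a aA; case/and3P: (hD _ _ (Df a aA)).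
have sB : B' \subset B by apply/subsetP => y /imsetP [a aA ->]; exact: fB.
pose D1 := fun x y => [&& D x y, x \in A', y \in B' & y != f x].
have cB' : #|B'| = #|A'| by rewrite card_in_imset.
have [As' [Bs' [M' [h0 h1 hnest hlev hdisj]]]] : exists As Bs M, good D1 k A' B' As Bs M.
  apply: IH => //.
  - exact: disjointW sA sB dAB.
  - by rewrite cB'.
  - move=> x y /and4P [Dxy -> -> _]; by case/and3P: (hD x y Dxy) => ->.
  - move=> a aA.
    have h2 : [set y | D a y] :\ f a \subset [set y | D1 a y].
      apply/subsetP => y; rewrite !inE => /andP [nyf Day].
      rewrite /D1 Day aA nyf /= andbT /B' -enb; exact: mem_nbh Day.
    have := subset_leq_card h2; have := cardsD1 (f a) [set y | D a y].
    have := hdeg a (subsetP sA a aA); case: (f a \in _); simpl; lia.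
pose M1 := [set [set a; f a] | a in A'].
have uniq1 : forall v a w, a \in A' -> w \in A' -> v \in [set a; f a] -> v \in [set w; f w] -> a = w.
  move=> v a w aA wA; rewrite !inE => /orP [/eqP va|/eqP va] /orP [/eqP vw|/eqP vw].
  - by rewrite -va -vw.
  - by exfalso; apply: (notAB v); [rewrite va; exact: subsetP sA a aA | rewrite vw; exact: fB].
  - by exfalso; apply: (notAB v); [rewrite vw; exact: subsetP sA w wA | rewrite va; exact: fB].
  - by apply: inj => //; rewrite -va -vw.
have pm1 : perfect_matching e (A' :|: B') M1.
  split.
  - move=> g /imsetP [a aA ->]; split.
      apply/existsP; exists a; apply/existsP; exists (f a); rewrite eqxx andbT.
      by case/and3P: (hD _ _ (Df a aA)).
    apply/subsetP => z; rewrite !inE => /orP [/eqP->|/eqP->]; first by rewrite aA.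
    by rewrite /B' imset_f ?orbT.
  - move=> v vV.
    have [w wA vw] : exists2 w, w \in A' & v \in [set w; f w].
      case/setUP: vV => [vA|/imsetP [w wA ->]]; first by exists v; rewrite // !inE eqxx.
      by exists w; rewrite // !inE eqxx orbT.
    have -> : [set g in M1 | v \in g] = [set [set w; f w]].
      apply/setP => g; rewrite !inE; apply/andP/eqP => [[/imsetP [a aA ->] va]| ->].
        by rewrite (uniq1 v a w aA wA va vw).
      by rewrite vw /M1; split => //; apply: (imset_f (fun a => [set a; f a])) wA.
    by rewrite cards1.
have dis1 : forall j, 0 < j <= k -> [disjoint M1 & M' j].
  move=> j hj; have [_ _ _ _ hE] := hlev j hj.
  rewrite -setI_eq0; apply/eqP/setP => g; rewrite !inE; apply/andP => -[].
  move=> /imsetP [a aA ->] /hE [x [y [/and4P [Dxy xA yB nyf] exy]]].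
  have xa : x = a.
    have : x \in [set a; f a] by rewrite exy !inE eqxx.
    rewrite !inE => /orP [/eqP //|/eqP xfa].
    by exfalso; apply: (notAB x); [exact: subsetP sA x xA | rewrite xfa; exact: fB].
  have : y \in [set a; f a] by rewrite exy !inE eqxx orbT.
  rewrite !inE => /orP [/eqP ya|/eqP yfa].
    by apply: (notAB y); [rewrite ya; exact: subsetP sA a aA | exact: subsetP sB y yB].
  by move: nyf; rewrite yfa xa eqxx.
exists (fun i => if i is i'.+1 then As' i' else A),
       (fun i => if i is i'.+1 then Bs' i' else B),
       (fun i => match i with 0 => set0 | 1 => M1 | i'.+1 => M' i' end).
split => //.
- case => [_|i hi] /=; first by rewrite h0 h1.
  exact: hnest.
- case => [|[|i]] hi //=.
    rewrite h0 h1; split => //.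
    + by rewrite -card_gt0 cB' card_gt0.
    + by move=> g /imsetP [a aA ->]; exists a, (f a); split => //; exact: Df.
  have [? ? ? ? hE] := hlev i.+1 hi; split => //.
  move=> g /hE [x [y [/and4P [Dxy _ _ _] ->]]]; by exists x, y.
- case => [|[|i]] [|[|j]] //= hi hj hij.
  + by apply: dis1.
  + by rewrite disjoint_sym; apply: dis1.
  + by apply: hdisj.
Qed.

End Hall.

Theorem lemma2p2 (T : finType) (e : rel T) (A B : {set T}) (delta : nat) :
  symmetric e -> irreflexive e ->
  [disjoint A & B] -> A :|: B = [set: T] ->
  (forall x y, e x y -> (x \in A) && (y \in B) || (x \in B) && (y \in A)) ->
  (forall v, delta <= deg e v) -> (exists v, deg e v = delta) ->
  #|B| <= #|A| ->
  exists (As Bs : nat -> {set T}) (M : nat -> {set {set T}}),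
    As 0 = A /\ Bs 0 = B /\
    (forall i, i < delta -> As i.+1 \subset As i /\ Bs i.+1 \subset Bs i) /\
    (forall i, 1 <= i <= delta ->
       As i != set0 /\ Bs i != set0 /\ #|As i| = #|Bs i| /\
       perfect_matching e (As i :|: Bs i) (M i)) /\
    (forall i j, 1 <= i <= delta -> 1 <= j <= delta -> i != j ->
       [disjoint M i & M j]).
Proof.
move=> _ _ dAB cov bip hmin [v0 _] leBA.
pose D := fun x y => [&& e x y, x \in A & y \in B].
have nA : A != set0.
  apply/eqP => A0; rewrite A0 cards0 leqn0 cards_eq0 in leBA.
  by move: (in_setT v0); rewrite -cov A0 (eqP leBA) setU0 inE.
have [As [Bs [M [h0 h1 hn hl hd]]]] : exists As Bs M, good e D delta A B As Bs M.
  apply: main_ind => //.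
  move=> a aA; apply: leq_trans (hmin a) _; apply: subset_leq_card.
  apply/subsetP => y; rewrite !inE => eay; rewrite /D eay aA /=.
  case/orP: (bip a y eay) => /andP [] // aB _.
  by move: (disjointFr dAB aA); rewrite aB.
exists As, Bs, M; do 4 (split => //).
by move=> i hi; have [? ? ? ? _] := hl i hi.
Qed.
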